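(* Let $(g,p)$ be any mechanism and let $(v,x,y)$ be a random triple with values in $\mathcal V^{n\times m}\times\mathcal X^n\times\mathcal Y^m$. (a) If the law of $(v,x,y)$ is bidder-symmetric, set $\mathcal Q=\mathcal Q_1$ and $\Delta=\Delta_1$; (b) if the law of $(v,x,y)$ is item-symmetric, set $\mathcal Q=\mathcal Q_2$ and $\Delta=\Delta_2$. In either case $$\mathbb E\Big[\sum_{i=1}^n[\mathcal Q p]_i(v,x,y)\Big]=\mathbb E\Big[\sum_{i=1}^n p_i(v,x,y)\Big]$$ and $$\mathbb E\Big[\sum_{i=1}^n reg_i(v,x,y)\Big]-\mathbb E\Big[\sum_{i=1}^n[\mathcal Q\, reg]_i(v,x,y)\Big]=\mathbb E\big[\Delta(g,p;v,x,y)\big]\ge0 .$$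
   Context: Setup: there are $n$ bidders and $m$ items. Bidder contexts $x=(x_1,\dots,x_n)\in\mathcal X^n$, item contexts $y=(y_1,\dots,y_m)\in\mathcal Y^m$, and a valuation (or bid) profile is a matrix $v=(v_{ij})\in\mathcal V^{n\times m}$ with $\mathcal V\subseteq\mathbb R_{\ge0}$; $v_i$ denotes row $i$, and for $v'\in\mathcal V^{n\times m}$ (or $v_i'\in\mathcal V^m$), $(v_i',v_{-i})$ is the matrix obtained from $v$ by replacing row $i$ with $v_i'$. A mechanism is a pair $(g,p)$ with allocation rule $g:\mathcal V^{n\times m}\times\mathcal X^n\times\mathcal Y^m\to\mathbb R^{n\times m}$ and payment rule $p:\mathcal V^{n\times m}\times\mathcal X^n\times\mathcal Y^m\to\mathbb R^{n}$ (an $n\times1$ column vector). The utility of bidder $i$ with valuation $v_i$ under bid profile $b$ is $u_i(v_i,b,x,y)=\sum_{j=1}^m g_{ij}(b,x,y)v_{ij}-p_i(b,x,y)$, and the ex-post regret is $reg_i(v,x,y)=\max_{b_i'\in\mathcal V^m}u_i(v_i,(b_i',v_{-i}),x,y)-u_i(v_i,v,x,y)$. For a permutation matrix $\sigma_n\in S_n$, $\sigma_n v$ permutes the rows of $v$, $\sigma_n x$ permutes bidder contexts accordingly, $\sigma_n p$ permutes entries of $p$; for $\sigma_m\in S_m$, $v\sigma_m$ permutes columns of $v$ and $y\sigma_m$ permutes item contexts accordingly. Bidder averaging: $\mathcal Q_1 g(v,x,y)=\frac1{n!}\sum_{\sigma_n}\sigma_n^{-1}g(\sigma_nv,\sigma_nx,y)$,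 $\mathcal Q_1 p(v,x,y)=\frac1{n!}\sum_{\sigma_n}\sigma_n^{-1}p(\sigma_nv,\sigma_nx,y)$. Item averaging: $\mathcal Q_2 g(v,x,y)=\frac1{m!}\sum_{\sigma_m}g(v\sigma_m,x,y\sigma_m)\sigma_m^{-1}$, $\mathcal Q_2 p(v,x,y)=\frac1{m!}\sum_{\sigma_m}p(v\sigma_m,x,y\sigma_m)$. For an averaging $\mathcal Q$, $\mathcal Q u$ and $\mathcal Q\,reg$ denote the utility and ex-post regret induced (by the formulas above) by the mechanism $(\mathcal Q g,\mathcal Q p)$. The regret gap is $\Delta_\cdot(g,p;v,x,y)=\max_{v'\in\mathcal V^{n\times m}}\sum_{i=1}^n u_i(v_i,(v_i',v_{-i}),x,y)-\max_{v'\in\mathcal V^{n\times m}}\sum_{i=1}^n[\mathcal Q_\cdot u]_i(v_i,(v_i',v_{-i}),x,y)$ with $\mathcal Q_\cdot\in\{\mathcal Q_1,\mathcal Q_2\}$ giving $\Delta_1,\Delta_2$. The law of $(v,x,y)$ is bidder-symmetric if $(\sigma_nv,\sigma_nx,y)$ has the same law as $(v,x,y)$ for every $\sigma_n\in S_n$, and item-symmetric if $(v\sigma_m,x,y\sigma_m)$ has the same law as $(v,x,y)$ for every $\sigma_m\in S_m$. All maxima are assumed attained, and all functions measurable with finite expectations. *)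

(* Defs.v *)
From HB Require Import structures.
From mathcomp Require Import all_boot all_algebra fingroup perm.
From mathcomp Require Import all_classical all_reals all_analysis.
Set Implicit Arguments. Unset Strict Implicit. Unset Printing Implicit Defensive.
Import GRing.Theory Num.Theory.
Local Open Scope classical_set_scope.
Local Open Scope ring_scope.

Record profile (R : realType) (n m : nat) (X Y : Type) := Profile {
  pv : 'I_n -> 'I_m -> R ;
  px : 'I_n -> X ;
  py : 'I_m -> Y }.

HB.instance Definition _ (R : realType) (n m : nat) (X Y : Type) :=
  gen_eqMixin (profile R n m X Y).
HB.instance Definition _ (R : realType) (n m : nat) (X Y : Type) :=
  gen_choiceMixin (profile R n m X Y).
HB.instance Definition _ (R : realType) (n m : nat) (dX dY : measure_display)
  (X : measurableType dX) (Y : measurableType dY) :=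
  isPointed.Build (profile R n m X Y) (Profile (fun _ _ => 0) (fun=> point) (fun=> point)).

Definition prof_gen (R : realType) (n m : nat) (dX dY : measure_display)
  (X : measurableType dX) (Y : measurableType dY)
  : set (set (profile R n m X Y)) :=
  [set A | (exists i j (B : set R), measurable B /\ A = [set z | B (pv z i j)])
        \/ (exists i (B : set X), measurable B /\ A = [set z | B (px z i)])
        \/ (exists j (B : set Y), measurable B /\ A = [set z | B (py z j)])].
Arguments prof_gen R n m {dX dY} X Y.


Notation ProfM R n m X Y := (g_sigma_algebraType (prof_gen R n m X Y)).

Record mech (R : realType) (n m : nat) (X Y : Type) := Mech {
  alloc : profile R n m X Y -> 'I_n -> 'I_m -> R ;
  pay   : profile R n m X Y -> 'I_n -> R }.

Definition rowrep (R : realType) (n m : nat) (v : 'I_n -> 'I_m -> R)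
  (i : 'I_n) (r : 'I_m -> R) : 'I_n -> 'I_m -> R :=
  fun k j => if k == i then r j else v k j.

Definition deviate (R : realType) (n m : nat) (X Y : Type)
  (z : profile R n m X Y) (i : 'I_n) (r : 'I_m -> R) : profile R n m X Y :=
  Profile (rowrep (pv z) i r) (px z) (py z).

Definition util (R : realType) (n m : nat) (X Y : Type) (M : mech R n m X Y)
  (i : 'I_n) (vi : 'I_m -> R) (b : profile R n m X Y) : R :=
  \sum_(j < m) alloc M b i j * vi j - pay M b i.

Definition Vrow (R : realType) (m : nat) (V : set R) : set ('I_m -> R) :=
  [set r | forall j, V (r j)].
Definition Vmat (R : realType) (n m : nat) (V : set R) : set ('I_n -> 'I_m -> R) :=
  [set w | forall i j, V (w i j)].

Definition brset (R : realType) (n m : nat) (X Y : Type) (V : set R)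
  (M : mech R n m X Y) (i : 'I_n) (z : profile R n m X Y) : set R :=
  [set util M i (pv z i) (deviate z i r) | r in Vrow V].

Definition swset (R : realType) (n m : nat) (X Y : Type) (V : set R)
  (M : mech R n m X Y) (z : profile R n m X Y) : set R :=
  [set \sum_(i < n) util M i (pv z i) (deviate z i (w i)) | w in Vmat V].

Definition has_max (R : realType) (S : set R) : Prop :=
  exists2 s, S s & forall t, S t -> t <= s.

(* the maxima (the sets are assumed to attain their sup) *)
Definition bestu (R : realType) (n m : nat) (X Y : Type) (V : set R)
  (M : mech R n m X Y) (i : 'I_n) (z : profile R n m X Y) : R :=
  sup (brset V M i z).
Definition swmax (R : realType) (n m : nat) (X Y : Type) (V : set R)
  (M : mech R n m X Y) (z : profile R n m X Y) : R :=
  sup (swset V M z).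

Definition reg (R : realType) (n m : nat) (X Y : Type) (V : set R)
  (M : mech R n m X Y) (i : 'I_n) (z : profile R n m X Y) : R :=
  bestu V M i z - util M i (pv z i) z.

Definition permB (R : realType) (n m : nat) (X Y : Type) (s : 'S_n)
  (z : profile R n m X Y) : profile R n m X Y :=
  Profile (fun i j => pv z (s i) j) (fun i => px z (s i)) (py z).

Definition permI (R : realType) (n m : nat) (X Y : Type) (t : 'S_m)
  (z : profile R n m X Y) : profile R n m X Y :=
  Profile (fun i j => pv z i (t j)) (px z) (fun j => py z (t j)).

Definition Q1 (R : realType) (n m : nat) (X Y : Type) (M : mech R n m X Y)
  : mech R n m X Y :=
  Mech (fun z i j => (n`!%:R)^-1 * \sum_(s : 'S_n) alloc M (permB s z) ((s^-1)%g i) j)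
       (fun z i => (n`!%:R)^-1 * \sum_(s : 'S_n) pay M (permB s z) ((s^-1)%g i)).

Definition Q2 (R : realType) (n m : nat) (X Y : Type) (M : mech R n m X Y)
  : mech R n m X Y :=
  Mech (fun z i j => (m`!%:R)^-1 * \sum_(t : 'S_m) alloc M (permI t z) i ((t^-1)%g j))
       (fun z i => (m`!%:R)^-1 * \sum_(t : 'S_m) pay M (permI t z) i).

Definition regret_gap (R : realType) (n m : nat) (X Y : Type) (V : set R)
  (M QM : mech R n m X Y) (z : profile R n m X Y) : R :=
  swmax V M z - swmax V QM z.

Definition bidder_sym (R : realType) (n m : nat) (dX dY : measure_display)
  (X : measurableType dX) (Y : measurableType dY)
  (mu : probability (ProfM R n m X Y) R) : Prop :=
  forall (s : 'S_n) (A : set (ProfM R n m X Y)),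
    measurable A -> mu (permB s @^-1` A) = mu A.
Definition item_sym (R : realType) (n m : nat) (dX dY : measure_display)
  (X : measurableType dX) (Y : measurableType dY)
  (mu : probability (ProfM R n m X Y) R) : Prop :=
  forall (t : 'S_m) (A : set (ProfM R n m X Y)),
    measurable A -> mu (permI t @^-1` A) = mu A.

Definition regular (R : realType) (n m : nat) (dX dY : measure_display)
  (X : measurableType dX) (Y : measurableType dY) (V : set R)
  (mu : probability (ProfM R n m X Y) R) (M : mech R n m X Y) : Prop :=
  [/\ (forall z : profile R n m X Y, Vmat V (pv z) ->
         (forall i, has_max (brset V M i z)) /\ has_max (swset V M z)),
      (forall i, mu.-integrable setT (fun z : ProfM R n m X Y => (pay M z i)%:E)),
      (forall i, mu.-integrable setT (fun z : ProfM R n m X Y => (util M i (pv z i) z)%:E)),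
      (forall i, mu.-integrable setT (fun z : ProfM R n m X Y => (bestu V M i z)%:E)) &
      mu.-integrable setT (fun z : ProfM R n m X Y => (swmax V M z)%:E)].

(* Main.v *)
Require Import Defs.
From HB Require Import structures.
From mathcomp Require Import all_boot all_algebra fingroup perm.
From mathcomp Require Import all_classical all_reals all_analysis.
Import order.Order.TTheory GRing.Theory Num.Theory.
Local Open Scope classical_set_scope.
Local Open Scope ring_scope.
Set Implicit Arguments. Unset Strict Implicit. Unset Printing Implicit Defensive.

Definition Int d (T : measurableType d) (R : realType)
  (mu : {measure set T -> \bar R}) (f : T -> R) :=
  mu.-integrable setT (EFin \o f).
Definition Er d (T : measurableType d) (R : realType)
  (mu : {measure set T -> \bar R}) (f : T -> R) : R :=
  fine (\int[mu]_z (f z)%:E)%E.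

Lemma ErE d (T : measurableType d) (R : realType)
  (mu : {measure set T -> \bar R}) (f : T -> R) :
  Int mu f -> (\int[mu]_z (f z)%:E)%E = (Er mu f)%:E.
Proof. by move=> h; rewrite /Er fineK //; exact: (integrable_fin_num measurableT h). Qed.

Lemma Int_ext d (T : measurableType d) (R : realType)
  (mu : {measure set T -> \bar R}) (f g : T -> R) :
  (forall z, f z = g z) -> Int mu f -> Int mu g.
Proof. by move=> fg; apply: eq_integrable => // z _ /=; rewrite fg. Qed.

Lemma Er_ext d (T : measurableType d) (R : realType)
  (mu : {measure set T -> \bar R}) (f g : T -> R) :
  (forall z, f z = g z) -> Er mu f = Er mu g.
Proof. by move=> fg; rewrite /Er; congr fine; apply: eq_integral => z _; rewrite fg. Qed.

Lemma Int_lin d (T : measurableType d) (R : realType)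
  (mu : {measure set T -> \bar R}) (a b : R) (f g : T -> R) :
  Int mu f -> Int mu g -> Int mu (fun z => a * f z + b * g z).
Proof.
move=> hf hg.
have := integrableD measurableT (integrableZl measurableT a hf) (integrableZl measurableT b hg).
by apply: eq_integrable => // z _.
Qed.

Lemma Er_lin d (T : measurableType d) (R : realType)
  (mu : {measure set T -> \bar R}) (a b : R) (f g : T -> R) :
  Int mu f -> Int mu g -> Er mu (fun z => a * f z + b * g z) = a * Er mu f + b * Er mu g.
Proof.
move=> hf hg.
have h1 := integrableZl measurableT a hf.
have h2 := integrableZl measurableT b hg.
apply: EFin_inj; rewrite -ErE; last exact: Int_lin.
rewrite EFinD !EFinM -!ErE //.
rewrite -(integralZl measurableT hf) -(integralZl measurableT hg).
rewrite -(integralD measurableT h1 h2).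
by apply: eq_integral => z _.
Qed.

Lemma Int_sum d (T : measurableType d) (R : realType)
  (mu : {measure set T -> \bar R}) (I : eqType) (s : seq I) (F : I -> T -> R) :
  (forall i, Int mu (F i)) -> Int mu (fun z => \sum_(i <- s) F i z).
Proof.
move=> hF; have := integrable_sum measurableT (P := xpredT) s (fun i _ => hF i).
by apply: eq_integrable => // z _ /=; rewrite sumEFin.
Qed.

Lemma Er_sum d (T : measurableType d) (R : realType)
  (mu : {measure set T -> \bar R}) (I : eqType) (s : seq I) (F : I -> T -> R) :
  (forall i, Int mu (F i)) -> Er mu (fun z => \sum_(i <- s) F i z) = \sum_(i <- s) Er mu (F i).
Proof.
move=> hF; apply: EFin_inj; rewrite -ErE; last exact: Int_sum.
rewrite -sumEFin.
under eq_bigr do rewrite -ErE //.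
rewrite -(integral_sum measurableT hF).
by apply: eq_integral => z _; rewrite sumEFin.
Qed.

Lemma Er_ae_eq d (T : measurableType d) (R : realType)
  (mu : {measure set T -> \bar R}) (N : set T) (f g : T -> R) :
  measurable N -> mu N = 0%E -> Int mu f -> Int mu g ->
  (forall z, ~ N z -> f z = g z) -> Er mu f = Er mu g.
Proof.
move=> mN N0 hf hg fg; rewrite /Er.
rewrite (negligible_integral mN measurableT hf N0).
rewrite (negligible_integral mN measurableT hg N0).
by congr fine; apply: eq_integral => z /set_mem [_ Nz]; rewrite /= fg.
Qed.

Lemma Er_ae_le d (T : measurableType d) (R : realType)
  (mu : {measure set T -> \bar R}) (N : set T) (f g : T -> R) :
  measurable N -> mu N = 0%E -> Int mu f -> Int mu g ->
  (forall z, ~ N z -> f z <= g z) -> Er mu f <= Er mu g.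
Proof.
move=> mN N0 hf hg fg; rewrite -lee_fin -!ErE //.
rewrite (negligible_integral mN measurableT hf N0).
rewrite (negligible_integral mN measurableT hg N0).
have mD : measurable (setT `\` N) by exact: measurableD.
apply: le_integral => //.
- exact: integrableS hf.
- exact: integrableS hg.
by move=> z /set_mem [_ Nz]; rewrite /= lee_fin fg.
Qed.

Lemma inv_Int d (T : measurableType d) (R : realType)
  (mu : {measure set T -> \bar R}) (phi : T -> T)
  (mphi : measurable_fun setT phi)
  (inv : forall A, measurable A -> mu (phi @^-1` A) = mu A) (f : T -> R) :
  Int mu f -> Int mu (f \o phi) /\ Er mu (f \o phi) = Er mu f.
Proof.
move=> hf.
have mf := measurable_int _ hf.
have eqm : forall g : T -> \bar R,
    (\int[mu]_(x in setT) g x = \int[pushforward mu phi]_(x in setT) g x)%E.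
  by move=> g; apply: eq_measure_integral => A mA _; exact: (esym (inv A mA)).
have hi : Int mu (f \o phi).
  apply/integrableP; split.
    move=> _ Y mY; rewrite setTI.
    have h1 := mf measurableT Y mY; rewrite setTI in h1.
    by have := mphi measurableT _ h1; rewrite setTI.
  have mab := measurable_int _ (integrable_abse hf).
  move/integrableP: hf => [_ hlt].
  have := ge0_integral_pushforward mphi mu (D := setT) (f := abse \o (EFin \o f))
    measurableT mab (fun y _ => abse_ge0 _).
  rewrite preimage_setT -eqm => <-; exact: hlt.
split => //.
rewrite /Er; congr fine.
have := integral_pushforward mphi (mu := mu) (D := setT) (f := EFin \o f) mf.
rewrite preimage_setT => h.
by rewrite -h // -eqm.
Qed.

Lemma has_max_sup (R : realType) (S : set R) :
  has_max S -> S (sup S) /\ (forall t, S t -> t <= sup S).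
Proof.
move=> [s Ss smax].
have hs : has_sup S by split; [exists s | exists s => t /smax].
have e : sup S = s.
  apply/le_anti/andP; split; first by apply: ge_sup; [exists s|move=> t /smax].
  exact: sup_upper_bound.
by rewrite e; split.
Qed.

Lemma sum_bestu (R : realType) (n m : nat) (X Y : Type) (V : set R)
  (M : mech R n m X Y) (z : profile R n m X Y) :
  Vmat V (pv z) ->
  (forall i, has_max (brset V M i z)) -> has_max (swset V M z) ->
  \sum_(i < n) bestu V M i z = swmax V M z.
Proof.
move=> Vz hb hs.
have [sw1 sw2] := has_max_sup hs.
have hb' := fun i => has_max_sup (hb i).
have : forall i, exists r, Vrow V r /\ util M i (pv z i) (deviate z i r) = bestu V M i z.
  by move=> i; have [[r Vr e] _] := hb' i; exists r.
move=> /choice [w hw].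
apply/le_anti/andP; split.
  rewrite /swmax; apply: (proj2 (has_max_sup hs)).
  exists w; first by move=> i j; have [+ _] := hw i; exact.
  by apply: eq_bigr => i _; have [_ ->] := hw i.
rewrite /swmax; case: sw1 => w' Vw' <-.
apply: ler_sum => i _; apply: (proj2 (hb' i)).
by exists (w' i) => // j; exact: Vw'.
Qed.

Lemma sum_perm (R : realType) n (s : 'S_n) (F : 'I_n -> R) :
  \sum_(i < n) F (s i) = \sum_(i < n) F i.
Proof. by rewrite [RHS](reindex_inj (@perm_inj _ s)). Qed.

Section Q1alg.
End Q1alg.

Lemma payQ1 (R : realType) (n m : nat) (X Y : Type) (M : mech R n m X Y) z :
  \sum_(i < n) pay (Q1 M) z i
  = (n`!%:R)^-1 * \sum_(s : 'S_n) \sum_(i < n) pay M (permB s z) i.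
Proof.
rewrite /= -mulr_sumr; congr (_ * _); rewrite exchange_big; apply: eq_bigr => s _.
exact: (sum_perm (s^-1)%g (fun i => pay M (permB s z) i)).
Qed.

Lemma utilQ1 (R : realType) (n m : nat) (X Y : Type) (M : mech R n m X Y) i vi b :
  util (Q1 M) i vi b
  = (n`!%:R)^-1 * \sum_(s : 'S_n) util M ((s^-1)%g i) vi (permB s b).
Proof.
rewrite /util /=.
under eq_bigr do rewrite -mulrA mulr_suml.
rewrite -mulr_sumr -mulrBr; congr (_ * _).
by rewrite exchange_big -sumrB.
Qed.

Lemma sumutilQ1 (R : realType) (n m : nat) (X Y : Type) (M : mech R n m X Y) z :
  \sum_(i < n) util (Q1 M) i (pv z i) z
  = (n`!%:R)^-1 * \sum_(s : 'S_n) \sum_(i < n) util M i (pv (permB s z) i) (permB s z).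
Proof.
under eq_bigr do rewrite utilQ1.
rewrite -mulr_sumr exchange_big; congr (_ * _); apply: eq_bigr => s _.
rewrite -[LHS](sum_perm s); apply: eq_bigr => k _.
by rewrite permK.
Qed.

Lemma permB_deviate (R : realType) (n m : nat) (X Y : Type) (s : 'S_n)
  (z : profile R n m X Y) i r :
  permB s (deviate z i r) = deviate (permB s z) ((s^-1)%g i) r.
Proof.
rewrite /permB /deviate /rowrep /=; congr Profile.
apply: funext => k; apply: funext => j.
have -> : (s k == i) = (k == (s^-1)%g i).
  by apply/eqP/eqP => [<-|->]; rewrite ?permK ?permKV.
by [].
Qed.

Lemma swmaxQ1 (R : realType) (n m : nat) (X Y : Type) (V : set R)
  (M : mech R n m X Y) z :
  has_max (swset V (Q1 M) z) ->
  (forall s : 'S_n, has_max (swset V M (permB s z))) ->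
  swmax V (Q1 M) z <= (n`!%:R)^-1 * \sum_(s : 'S_n) swmax V M (permB s z).
Proof.
move=> hQ hM; rewrite /swmax.
have [[w Vw <-] _] := has_max_sup hQ.
under eq_bigr do rewrite utilQ1.
rewrite -mulr_sumr exchange_big /=.
apply: ler_wpM2l; first by rewrite invr_ge0.
apply: ler_sum => s _.
rewrite -(sum_perm s).
apply: (proj2 (has_max_sup (hM s))).
exists (fun k => w (s k)); first by move=> k j; apply: Vw.
by apply: eq_bigr => k _; rewrite permB_deviate permK.
Qed.

Lemma payQ2 (R : realType) (n m : nat) (X Y : Type) (M : mech R n m X Y) z :
  \sum_(i < n) pay (Q2 M) z i
  = (m`!%:R)^-1 * \sum_(t : 'S_m) \sum_(i < n) pay M (permI t z) i.
Proof. by rewrite /= -mulr_sumr; congr (_ * _); rewrite exchange_big. Qed.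

Lemma utilQ2 (R : realType) (n m : nat) (X Y : Type) (M : mech R n m X Y) i vi b :
  util (Q2 M) i vi b
  = (m`!%:R)^-1 * \sum_(t : 'S_m) util M i (fun j => vi (t j)) (permI t b).
Proof.
rewrite /util /=.
under eq_bigr do rewrite -mulrA mulr_suml.
rewrite -mulr_sumr -mulrBr; congr (_ * _).
rewrite exchange_big -sumrB; apply: eq_bigr => t _; congr (_ - _).
rewrite -(sum_perm t); apply: eq_bigr => j _.
by rewrite permK.
Qed.

Lemma sumutilQ2 (R : realType) (n m : nat) (X Y : Type) (M : mech R n m X Y) z :
  \sum_(i < n) util (Q2 M) i (pv z i) z
  = (m`!%:R)^-1 * \sum_(t : 'S_m) \sum_(i < n) util M i (pv (permI t z) i) (permI t z).
Proof.
under eq_bigr do rewrite utilQ2.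
by rewrite -mulr_sumr exchange_big.
Qed.

Lemma swmaxQ2 (R : realType) (n m : nat) (X Y : Type) (V : set R)
  (M : mech R n m X Y) z :
  has_max (swset V (Q2 M) z) ->
  (forall t : 'S_m, has_max (swset V M (permI t z))) ->
  swmax V (Q2 M) z <= (m`!%:R)^-1 * \sum_(t : 'S_m) swmax V M (permI t z).
Proof.
move=> hQ hM; rewrite /swmax.
have [[w Vw <-] _] := has_max_sup hQ.
under eq_bigr do rewrite utilQ2.
rewrite -mulr_sumr exchange_big /=.
apply: ler_wpM2l; first by rewrite invr_ge0.
apply: ler_sum => t _.
apply: (proj2 (has_max_sup (hM t))).
exists (fun k j => w k (t j)); first by move=> k j; apply: Vw.
by [].
Qed.

Lemma Int_scale d (T : measurableType d) (R : realType)
  (mu : {measure set T -> \bar R}) (a : R) (f : T -> R) :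
  Int mu f -> Int mu (fun z => a * f z).
Proof.
move=> hf; apply: Int_ext (Int_lin a 0 hf hf) => z; by rewrite mul0r addr0.
Qed.

Lemma Er_scale d (T : measurableType d) (R : realType)
  (mu : {measure set T -> \bar R}) (a : R) (f : T -> R) :
  Int mu f -> Er mu (fun z => a * f z) = a * Er mu f.
Proof.
move=> hf; rewrite -[RHS]addr0 -(mul0r (Er mu f)) -(Er_lin a 0 hf hf).
by apply: Er_ext => z; rewrite mul0r addr0.
Qed.

Lemma Er_sub d (T : measurableType d) (R : realType)
  (mu : {measure set T -> \bar R}) (f g : T -> R) :
  Int mu f -> Int mu g -> Int mu (fun z => f z - g z) /\
  Er mu (fun z => f z - g z) = Er mu f - Er mu g.
Proof.
move=> hf hg; split.
  by apply: Int_ext (Int_lin 1 (-1) hf hg) => z; rewrite !mulN1r !mul1r.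
rewrite -[Er mu f]mul1r -mulN1r -(Er_lin 1 (-1) hf hg).
by apply: Er_ext => z; rewrite mulN1r mul1r.
Qed.

Lemma avgE d (T : measurableType d) (R : realType)
  (mu : {measure set T -> \bar R}) (S : finType) (phi : S -> T -> T) (c : R)
  (c1 : c * #|S|%:R = 1)
  (mphi : forall s, measurable_fun setT (phi s))
  (inv : forall s A, measurable A -> mu (phi s @^-1` A) = mu A) (f : T -> R) :
  Int mu f -> Int mu (fun z => c * \sum_(s : S) f (phi s z)) /\
  Er mu (fun z => c * \sum_(s : S) f (phi s z)) = Er mu f.
Proof.
move=> hf.
have hs : forall s, Int mu (fun z => f (phi s z)) /\ Er mu (fun z => f (phi s z)) = Er mu f.
  by move=> s; exact: (inv_Int (mphi s) (inv s) hf).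
have hI : Int mu (fun z => \sum_(s : S) f (phi s z)).
  by apply: (@Int_sum _ _ _ mu _ (index_enum S) (fun s z => f (phi s z))) => s; case: (hs s).
split; first exact: Int_scale.
rewrite Er_scale // (@Er_sum _ _ _ mu _ (index_enum S) (fun s z => f (phi s z))); last by move=> s; case: (hs s).
under eq_bigr do rewrite (proj2 (hs _)).
by rewrite sumr_const -mulr_natr (_ : #|xpredT| = #|S|) // mulrCA c1 mulr1.
Qed.

Lemma regE (R : realType) (n m : nat) (dX dY : measure_display)
  (X : measurableType dX) (Y : measurableType dY) (V : set R)
  (mu : probability (ProfM R n m X Y) R)
  (N : set (ProfM R n m X Y)) (mN : measurable N) (N0 : mu N = 0%E)
  (hN : forall z, ~ N z -> Vmat V (pv z))
  (K : mech R n m X Y) (hK : regular V mu K) :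
  [/\ Int mu (fun z => \sum_(i < n) reg V K i z),
      Int mu (fun z => \sum_(i < n) util K i (pv z i) z),
      Int mu (fun z => swmax V K z) &
  Er mu (fun z => \sum_(i < n) reg V K i z)
  = Er mu (fun z => swmax V K z) - Er mu (fun z => \sum_(i < n) util K i (pv z i) z)].
Proof.
case: hK => hmax hp hu hb hsw.
have Iu : Int mu (fun z => \sum_(i < n) util K i (pv z i) z).
  by apply: (@Int_sum _ _ _ mu _ _ (fun i z => util K i (pv z i) z)) => i; exact: hu.
have Ib : Int mu (fun z => \sum_(i < n) bestu V K i z).
  by apply: (@Int_sum _ _ _ mu _ _ (fun i z => bestu V K i z)) => i; exact: hb.
have Isw : Int mu (fun z => swmax V K z) by exact: hsw.
have [Ir Er1] := Er_sub Ib Iu.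
have ext : forall z, \sum_(i < n) reg V K i z =
    \sum_(i < n) bestu V K i z - \sum_(i < n) util K i (pv z i) z.
  by move=> z; rewrite /reg sumrB.
split => //; first by apply: (Int_ext _ Ir) => z /=; rewrite ext.
rewrite (Er_ext mu ext) Er1; congr (_ - _).
apply: (Er_ae_eq mN N0 Ib Isw) => z Nz.
have [h1 h2] := hmax z (hN z Nz).
exact: sum_bestu (hN z Nz) h1 h2.
Qed.

Lemma generic (R : realType) (n m : nat) (dX dY : measure_display)
  (X : measurableType dX) (Y : measurableType dY) (V : set R)
  (mu : probability (ProfM R n m X Y) R)
  (N : set (ProfM R n m X Y)) (mN : measurable N) (N0 : mu N = 0%E)
  (hN : forall z, ~ N z -> Vmat V (pv z))
  (S : finType) (T : S -> ProfM R n m X Y -> ProfM R n m X Y) (c : R)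
  (c1 : c * #|S|%:R = 1)
  (mT : forall s, measurable_fun setT (T s))
  (invT : forall s A, measurable A -> mu (T s @^-1` A) = mu A)
  (VT : forall s z, Vmat V (pv z) -> Vmat V (pv (T s z)))
  (M QM : mech R n m X Y) (hM : regular V mu M) (hQ : regular V mu QM)
  (hpay : forall z, \sum_(i < n) pay QM z i
      = c * \sum_(s : S) \sum_(i < n) pay M (T s z) i)
  (hutil : forall z, \sum_(i < n) util QM i (pv z i) z
      = c * \sum_(s : S) \sum_(i < n) util M i (pv (T s z) i) (T s z))
  (hsw : forall z, has_max (swset V QM z) -> (forall s, has_max (swset V M (T s z))) ->
      swmax V QM z <= c * \sum_(s : S) swmax V M (T s z)) :
     (\int[mu]_z (\sum_(i < n) pay QM z i)%:E
       = \int[mu]_z (\sum_(i < n) pay M z i)%:E)%E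
   /\ (\int[mu]_z (\sum_(i < n) reg V M i z)%:E
        - \int[mu]_z (\sum_(i < n) reg V QM i z)%:E
       = \int[mu]_z (regret_gap V M QM z)%:E)%E
   /\ (0 <= \int[mu]_z (regret_gap V M QM z)%:E)%E.
Proof.
have avg := avgE c1 mT invT.
have IpM : Int mu (fun z => \sum_(i < n) pay M z i).
  by apply: (@Int_sum _ _ _ mu _ _ (fun i z => pay M z i)) => i; case: hM => _ hp _ _ _; exact: hp.
have IpQ : Int mu (fun z => \sum_(i < n) pay QM z i).
  by apply: (@Int_sum _ _ _ mu _ _ (fun i z => pay QM z i)) => i; case: hQ => _ hp _ _ _; exact: hp.
have [IrM IuM IsM ErM] := regE mN N0 hN hM.
have [IrQ IuQ IsQ ErQ] := regE mN N0 hN hQ.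
have [Igap Egap] := Er_sub IsM IsQ.
have Egap' : Er mu (fun z => regret_gap V M QM z)
    = Er mu (fun z => swmax V M z) - Er mu (fun z => swmax V QM z) by [].
have EuQ : Er mu (fun z => \sum_(i < n) util QM i (pv z i) z)
    = Er mu (fun z => \sum_(i < n) util M i (pv z i) z).
  rewrite (Er_ext mu hutil).
  exact: (proj2 (avg (fun z => \sum_(i < n) util M i (pv z i) z) IuM)).
have EsQ : Er mu (fun z => swmax V QM z) <= Er mu (fun z => swmax V M z).
  have [Ia Ea] := avg (fun z => swmax V M z) IsM.
  rewrite -Ea; apply: (Er_ae_le mN N0 IsQ Ia) => z Nz.
  have Vz := hN z Nz.
  case: hQ => hQmax _ _ _ _; case: hM => hMmax _ _ _ _.
  apply: hsw; first exact: (proj2 (hQmax z Vz)).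
  by move=> s; exact: (proj2 (hMmax _ (VT s z Vz))).
split; [|split].
- rewrite (ErE IpQ) (ErE IpM); congr EFin.
  rewrite (Er_ext mu hpay).
  exact: (proj2 (avg (fun z => \sum_(i < n) pay M z i) IpM)).
- rewrite (ErE IrM) (ErE IrQ) (ErE Igap) -EFinB; congr EFin.
  rewrite ErM ErQ Egap EuQ.
  by rewrite opprB addrA subrK.
- rewrite (ErE Igap) lee_fin Egap subr_ge0; exact: EsQ.
Qed.

Lemma permB_meas (R : realType) (n m : nat) (dX dY : measure_display)
  (X : measurableType dX) (Y : measurableType dY) (s : 'S_n) :
  measurable_fun setT (permB s : ProfM R n m X Y -> ProfM R n m X Y).
Proof.
apply: (@measurability _ _ (ProfM R n m X Y) (ProfM R n m X Y) setT _ (prof_gen R n m X Y)) => //.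
move=> _ [B GB <-]; apply: sub_sigma_algebra; rewrite setTI.
case: GB => [[i [j [C [mC ->]]]]|[[i [C [mC ->]]]|[j [C [mC ->]]]]].
- by left; exists (s i), j, C.
- by right; left; exists (s i), C.
- by right; right; exists j, C.
Qed.

Lemma permI_meas (R : realType) (n m : nat) (dX dY : measure_display)
  (X : measurableType dX) (Y : measurableType dY) (t : 'S_m) :
  measurable_fun setT (permI t : ProfM R n m X Y -> ProfM R n m X Y).
Proof.
apply: (@measurability _ _ (ProfM R n m X Y) (ProfM R n m X Y) setT _ (prof_gen R n m X Y)) => //.
move=> _ [B GB <-]; apply: sub_sigma_algebra; rewrite setTI.
case: GB => [[i [j [C [mC ->]]]]|[[i [C [mC ->]]]|[j [C [mC ->]]]]].
- by left; exists i, (t j), C.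
- by right; left; exists i, C.
- by right; right; exists (t j), C.
Qed.

Lemma fact_c1 (R : realType) k : (k`!%:R : R)^-1 * k`!%:R = 1.
Proof. by rewrite mulVf // pnatr_eq0 -lt0n fact_gt0. Qed.

Unset Implicit Arguments.
Theorem theorem1 (R : realType) (n m : nat) (dX dY : measure_display)
  (X : measurableType dX) (Y : measurableType dY)
  (V : set R) (V_nneg : forall r, V r -> 0 <= r)
  (mu : probability (ProfM R n m X Y) R)
  (mu_supp : {ae mu, forall z : ProfM R n m X Y, Vmat V (pv z)})
  (M : mech R n m X Y) (M_reg : regular V mu M) :
  (bidder_sym mu -> regular V mu (Q1 M) ->
     (\int[mu]_z (\sum_(i < n) pay (Q1 M) z i)%:E
       = \int[mu]_z (\sum_(i < n) pay M z i)%:E)%E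
   /\ (\int[mu]_z (\sum_(i < n) reg V M i z)%:E
        - \int[mu]_z (\sum_(i < n) reg V (Q1 M) i z)%:E
       = \int[mu]_z (regret_gap V M (Q1 M) z)%:E)%E
   /\ (0 <= \int[mu]_z (regret_gap V M (Q1 M) z)%:E)%E)
  /\
  (item_sym mu -> regular V mu (Q2 M) ->
     (\int[mu]_z (\sum_(i < n) pay (Q2 M) z i)%:E
       = \int[mu]_z (\sum_(i < n) pay M z i)%:E)%E
   /\ (\int[mu]_z (\sum_(i < n) reg V M i z)%:E
        - \int[mu]_z (\sum_(i < n) reg V (Q2 M) i z)%:E
       = \int[mu]_z (regret_gap V M (Q2 M) z)%:E)%E
   /\ (0 <= \int[mu]_z (regret_gap V M (Q2 M) z)%:E)%E).
Proof.
case: mu_supp => N [mN N0 sub].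
have hN : forall z, ~ N z -> Vmat V (pv z).
  by move=> z Nz; apply: contrapT => nV; exact: Nz (sub z nV).
split => [hsym hQ|hsym hQ].
- apply: (generic (S := {perm 'I_n}) mN N0 hN (c := (n`!%:R)^-1) _
    (@permB_meas R n m dX dY X Y) hsym _ M_reg hQ).
  + by rewrite card_Sn fact_c1.
  + by move=> s z Vz i j; exact: Vz.
  + exact: payQ1.
  + exact: sumutilQ1.
  + move=> z h1 h2; exact: swmaxQ1.
- apply: (generic (S := {perm 'I_m}) mN N0 hN (c := (m`!%:R)^-1) _
    (@permI_meas R n m dX dY X Y) hsym _ M_reg hQ).
  + by rewrite card_Sn fact_c1.
  + by move=> t z Vz i j; exact: Vz.
  + exact: payQ2.
  + exact: sumutilQ2.
  + move=> z h1 h2; exact: swmaxQ2.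
Qed.
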